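(* Let $L\geq1$ be an integer, $P\geq 0$, $p_B\in[0,1]$, and let $\alpha\sim\mathrm{Binomial}(L,1-p_B)$. Then $$\sup_{r\in\mathbb{R}} r\cdot\mathbb{P}\big(\log(1+\alpha P)\geq r\big)=\max_{i\in\{1,\ldots,L\}}\mathbb{P}(\alpha\geq i)\log(1+iP).$$
   Context: The left-hand side is the outage capacity of a multi-point intermittent block fading channel with $L$ transmitters, each independently blocked with probability $p_B$, and per-transmitter power $P$; $\alpha$ is the number of non-blocked transmitters. $\log$ is the logarithm in a fixed base. *)

(* Defs.v *)
From HB Require Import structures.
From mathcomp Require Import all_boot all_order all_algebra.
From mathcomp Require Import all_classical all_reals exp.
Set Implicit Arguments. Unset Strict Implicit. Unset Printing Implicit Defensive.
Import Order.TTheory GRing.Theory Num.Theory.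
Local Open Scope ring_scope.

Definition binom_pmf {R : realType} (L : nat) (q : R) (k : nat) : R :=
  'C(L, k)%:R * q ^+ k * (1 - q) ^+ (L - k).

Definition prob_binom {R : realType} (L : nat) (q : R) (A : pred nat) : R :=
  \sum_(k < L.+1 | A k) binom_pmf L q k.

Definition logb {R : realType} (b x : R) : R := ln x / ln b.

(* Main.v *)
Require Import Defs.
From HB Require Import structures.
From mathcomp Require Import all_boot all_order all_algebra.
From mathcomp Require Import all_classical all_reals exp.
Import Order.TTheory GRing.Theory Num.Theory.
Local Open Scope ring_scope.
Local Open Scope classical_set_scope.

Lemma prob_ge0 (R : realType) L (q : R) A : 0 <= q <= 1 -> 0 <= prob_binom L q A.
Proof.
move=> /andP[q0 q1]; apply: sumr_ge0 => k _; rewrite /binom_pmf.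
by rewrite !mulr_ge0 // exprn_ge0 // subr_ge0.
Qed.

Lemma logb_mono (R : realType) (P b : R) (i k : nat) : 0 <= P -> 1 < b ->
  (i <= k)%N -> logb b (1 + i%:R * P) <= logb b (1 + k%:R * P).
Proof.
move=> P0 b1 ik; rewrite /logb ler_pM2r ?invr_gt0 ?ln_gt0 //.
have pos : forall j : nat, 0 < 1 + j%:R * P.
  by move=> j; rewrite ltr_pwDl // mulr_ge0.
rewrite ler_ln; last 2 first; [by rewrite posrE pos|by rewrite posrE pos|].
by rewrite lerD2l; apply: ler_wpM2r => //; rewrite ler_nat.
Qed.

Lemma logb0 (R : realType) (P b : R) : logb b (1 + 0%:R * P) = 0.
Proof. by rewrite /logb mul0r addr0 ln1 mul0r. Qed.

Theorem proposition2 (R : realType) (L : nat) (P pB b : R) :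
  (1 <= L)%N -> 0 <= P -> 0 <= pB <= 1 -> 1 < b ->
  sup [set r * prob_binom L (1 - pB) (fun k : nat => r <= logb b (1 + k%:R * P))
      | r in [set: R]]
  = \big[Num.max/0]_(1 <= i < L.+1)
      (prob_binom L (1 - pB) (fun k : nat => (i <= k)%N) * logb b (1 + i%:R * P)).
Proof.
move=> L1 P0 /andP[pB0 pB1] b1.
have q01 : 0 <= 1 - pB <= 1.
  by rewrite subr_ge0 pB1 /= lerBlDr lerDl.
set f := fun k : nat => logb b (1 + k%:R * P).
set S := [set _ | _ in _].
set M := \big[_/_]_(_ <= _ < _) _.
have M0 : 0 <= M by apply: bigmax_ge_id.
have fge0 : forall k, 0 <= f k.
  by move=> k; rewrite /f -(logb0 _ P b); apply: logb_mono.
have term_in : forall i : nat, S (prob_binom L (1 - pB) (fun k : nat => (i <= k)%N) * f i).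
  move=> i; exists (f i) => //.
  have [Pz|Ppos] := eqVneq P 0.
    by rewrite /f Pz !mulr0 !addr0 /logb ln1 !mul0r mulr0.
  rewrite mulrC; congr (_ * _); apply: eq_bigl => k /=.
  apply/idP/idP; last by apply: logb_mono.
  apply: contraLR; rewrite -!ltnNge -!ltNge => ki.
  rewrite /f /logb ltr_pM2r ?invr_gt0 ?ln_gt0 //.
  have pos : forall j : nat, 0 < 1 + j%:R * P.
    by move=> j; rewrite ltr_pwDl // mulr_ge0.
  rewrite ltr_ln; last 2 first; [by rewrite posrE pos|by rewrite posrE pos|].
  rewrite ltrD2l ltr_pM2r ?ltr_nat //.
  by rewrite lt_def Ppos.
have MS : S M.
  rewrite /M; apply: big_ind.
  - by exists 0 => //; rewrite mul0r.
  - by move=> x y Sx Sy; rewrite /Num.max /Order.max; case: ifP.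
  - by move=> i _; apply: term_in.
have ub : ubound S M.
  move=> _ [r _ <-].
  have [r0|r0] := leP r 0.
    by apply: le_trans M0; rewrite mulr_le0_ge0 // prob_ge0.
  set A := fun k : nat => r <= f k.
  case: (boolP [exists k : 'I_L.+1, A k]) => [/existsP ex|nex].
    have exn : exists k, (k <= L)%N && A k.
      by case: ex => k Ak; exists k; rewrite Ak andbT -ltnS ltn_ord.
    case: (ex_minnP exn) => i /andP[iL Ai] imin.
    have i1 : (1 <= i)%N.
      rewrite lt0n; apply/eqP => i0; move: Ai; rewrite /A i0 /f logb0.
      by rewrite leNgt r0.
    have eqA : prob_binom L (1 - pB) A = prob_binom L (1 - pB) (fun k : nat => (i <= k)%N).
      apply: eq_bigl => k /=; apply/idP/idP.
        by move=> Ak; apply: imin; rewrite Ak andbT -ltnS ltn_ord.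
      by move=> ik; rewrite /A; apply: le_trans Ai _; apply: logb_mono.
    rewrite eqA; apply: (@le_trans _ _ (prob_binom L (1 - pB) (fun k : nat => (i <= k)%N) * f i)).
      by rewrite mulrC ler_wpM2l ?prob_ge0.
    rewrite /M /f; apply: (le_bigmax_seq 0 i xpredT (fun i => prob_binom L (1 - pB) (fun k : nat => (i <= k)%N) * logb b (1 + i%:R * P))) => //.
    by rewrite mem_index_iota i1 ltnS.
  have -> : prob_binom L (1 - pB) A = 0.
    apply: big1 => k Ak; exfalso; move/negP: nex; apply; apply/existsP; by exists k.
  by rewrite mulr0.
apply/le_anti/andP; split.
  apply: ge_sup; [by exists M | exact: ub].
apply: ub_le_sup; [by exists M | exact: MS].
Qed.
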